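(* For every formula $\varphi$ of $\mathcal L^{\bigcirc}_\square$: $\varphi$ is derivable in $\mathbf{wK4C}$ if and only if $\varphi$ is valid, with respect to the $d$-semantics, on every dynamic topological system $\langle X,\tau,f\rangle$ with $X$ finite.
   Context: Fix a non-empty set $\mathsf{PV}$ of propositional variables. The language $\mathcal L^{\bigcirc}_\square$ is given by $\varphi::= p\mid \varphi\wedge\varphi\mid\neg\varphi\mid\square\varphi\mid\bigcirc\varphi$ with $p\in\mathsf{PV}$; $\lozenge:=\neg\square\neg$. Axioms and rules: Taut (all propositional tautologies); K: $\square(\varphi\to\psi)\to(\square\varphi\to\square\psi)$; w4: $\varphi\wedge\square\varphi\to\square\square\varphi$; ${\rm Next}_\neg$: $\neg\bigcirc\varphi\leftrightarrow\bigcirc\neg\varphi$; ${\rm Next}_\wedge$: $\bigcirc(\varphi\wedge\psi)\leftrightarrow\bigcirc\varphi\wedge\bigcirc\psi$; C: $\bigcirc\varphi\wedge\bigcirc\square\varphi\to\square\bigcirc\varphi$; rules modus ponens, ${\rm Nec}_\square$ (from $\varphi$ infer $\square\varphi$), ${\rm Nec}_\bigcirc$ (from $\varphi$ infer $\bigcirc\varphi$). $\mathbf{wK4C}$ is the logic axiomatised by Taut, K, w4, ${\rm Next}_\neg$, ${\rm Next}_\wedge$, C and closed under MP, ${\rm Nec}_\square$, ${\rm Nec}_\bigcirc$. A dynamic topological system (DTS) is $\langle X,\tau,f\rangle$ with $\langle X,\tau\rangle$ a topological space and $f\colon X\to X$ continuous. For $A\subseteq X$, the Cantor derivative $d(A)$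 is the set of $x\in X$ lying in the closure of $A\setminus\{x\}$. Given a valuation $\nu\colon\mathsf{PV}\to\wp(X)$, truth sets are: $\|p\|=\nu(p)$, $\|\neg\varphi\|=X\setminus\|\varphi\|$, $\|\varphi\wedge\psi\|=\|\varphi\|\cap\|\psi\|$, $\|\square\varphi\|=X\setminus d(\|\neg\varphi\|)$, $\|\bigcirc\varphi\|=f^{-1}(\|\varphi\|)$. A formula is valid on a DTS if its truth set is $X$ for every valuation. *)

(* Defs.v *)
From mathcomp Require Import all_boot.
From mathcomp Require Import all_classical.
From mathcomp Require Import topology.
Set Implicit Arguments. Unset Strict Implicit. Unset Printing Implicit Defensive.
Local Open Scope classical_set_scope.

Inductive formula (PV : Type) : Type :=
| Var  : PV -> formula PV
| And  : formula PV -> formula PV -> formula PV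
| Neg  : formula PV -> formula PV
| Box  : formula PV -> formula PV
| Next : formula PV -> formula PV.
Arguments Var {PV}. Arguments And {PV}. Arguments Neg {PV}.
Arguments Box {PV}. Arguments Next {PV}.

Definition Or   {PV} (a b : formula PV) := Neg (And (Neg a) (Neg b)).
Definition Imp  {PV} (a b : formula PV) := Neg (And a (Neg b)).
Definition Iff  {PV} (a b : formula PV) := And (Imp a b) (Imp b a).
Definition Dia  {PV} (a : formula PV) := Neg (Box (Neg a)).

Fixpoint beval {PV} (v : formula PV -> bool) (phi : formula PV) : bool :=
  match phi with
  | Var p => v (Var p)
  | And a b => beval v a && beval v b
  | Neg a => ~~ beval v a
  | Box a => v (Box a)
  | Next a => v (Next a)
  end.

(* phi is (a substitution instance of) a propositional tautology *)
Definition tautology {PV} (phi : formula PV) : Prop :=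
  forall v : formula PV -> bool, beval v phi = true.

Inductive wK4C {PV : Type} : formula PV -> Prop :=
| ax_taut  phi : tautology phi -> wK4C phi
| ax_K     phi psi : wK4C (Imp (Box (Imp phi psi)) (Imp (Box phi) (Box psi)))
| ax_w4    phi : wK4C (Imp (And phi (Box phi)) (Box (Box phi)))
| ax_NextNeg phi : wK4C (Iff (Neg (Next phi)) (Next (Neg phi)))
| ax_NextAnd phi psi : wK4C (Iff (Next (And phi psi)) (And (Next phi) (Next psi)))
| ax_C     phi : wK4C (Imp (And (Next phi) (Next (Box phi))) (Box (Next phi)))
| rule_MP  phi psi : wK4C (Imp phi psi) -> wK4C phi -> wK4C psi
| rule_NecBox phi : wK4C phi -> wK4C (Box phi)
| rule_NecNext phi : wK4C phi -> wK4C (Next phi).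

Definition cantor_deriv {X : topologicalType} (A : set X) : set X :=
  [set x | closure (A `\ x) x].

Fixpoint truth {PV} {X : topologicalType} (f : X -> X) (nu : PV -> set X)
    (phi : formula PV) : set X :=
  match phi with
  | Var p => nu p
  | And a b => truth f nu a `&` truth f nu b
  | Neg a => ~` truth f nu a
  | Box a => ~` cantor_deriv (~` truth f nu a)
  | Next a => f @^-1` truth f nu a
  end.

Definition valid_on {PV} {X : topologicalType} (f : X -> X) (phi : formula PV) : Prop :=
  forall nu : PV -> set X, truth f nu phi = setT.

(* Main.v *)
Require Import Defs.
From HB Require Import structures.
From mathcomp Require Import all_boot all_classical topology zify.
From Stdlib Require List Lia.
Set Implicit Arguments. Unset Strict Implicit. Unset Printing Implicit Defensive.
Local Open Scope classical_set_scope.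


Definition alex (T : Type) (le : T -> T -> Prop) : Type := T.
Section Alex.
Variables (T : Type) (le : T -> T -> Prop).
Local Notation alex := (@alex T le).
HB.instance Definition _ := gen_eqMixin alex.
HB.instance Definition _ := gen_choiceMixin alex.
Definition upop (A : set alex) : Prop := forall x y, A x -> le x y -> A y.
Lemma upopT : upop setT. Proof. by []. Qed.
Lemma upopI : setI_closed upop.
Proof. by move=> A B hA hB x y [Ax Bx] l; split; [exact: hA Ax l|exact: hB Bx l]. Qed.
Lemma upopU (I : Type) (f : I -> set alex) : (forall i, upop (f i)) -> upop (\bigcup_i f i).
Proof. by move=> h x y [i _ fx] l; exists i => //; exact: h fx l. Qed.
HB.instance Definition _ := isOpenTopological.Build alex upopT upopI upopU.
End Alex.

Section AlexProps.
Variables (T : Type) (le : T -> T -> Prop).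
Hypothesis le_refl : forall x, le x x.
Hypothesis le_trans : forall x y z, le x y -> le y z -> le x z.

Lemma alex_nbhs (x : @alex T le) (A : set (@alex T le)) : nbhs x A <-> (forall y, le x y -> A y).
Proof.
split.
  by move=> [B [oB Bx sBA]] y lxy; apply: sBA; exact: oB Bx lxy.
move=> h; exists [set y | le x y]; split => //.
by move=> y z lxy lyz; exact: le_trans lxy lyz.
Qed.

Lemma alex_closure (x : @alex T le) (A : set (@alex T le)) : closure A x <-> exists y, le x y /\ A y.
Proof.
split.
  move=> /(_ [set y | le x y]) h.
  have /h [y [Ay lxy]] : nbhs x [set y | le x y] by apply/alex_nbhs.
  by exists y.
move=> [y [lxy Ay]] B /alex_nbhs hB; exists y; split => //; exact: hB.
Qed.

Lemma alex_cont (f : @alex T le -> @alex T le) : (forall x y, le x y -> le (f x) (f y)) -> continuous f.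
Proof.
move=> mf; apply/continuousP => A oA.
have oA' : @upop T le A := oA.
change (@upop T le (f @^-1` A)) => x y Ax lxy.
exact: oA' _ _ Ax (mf _ _ lxy).
Qed.
End AlexProps.


Section Sound.
Variables (PV : Type) (X : topologicalType) (f : X -> X) (nu : PV -> set X).
Hypothesis fc : continuous f.
Local Notation tr := (truth f nu).

Lemma truth_box (x : X) a :
  tr (Box a) x <-> exists B, nbhs x B /\ (forall y, B y -> y <> x -> tr a y).
Proof.
split.
  move=> h; have : ~ (forall B, nbhs x B -> ((~` tr a) `\ x) `&` B !=set0) by [].
  move=> /existsNP [B /not_implyP [nB hB]]; exists B; split => // y By ynx.
  apply: contrapT => nta; apply: hB; exists y; split => //; split => //.
move=> [B [nB hB]] hcl.
have [y [[nty ynx] By]] := hcl B nB.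
by apply: nty; apply: hB.
Qed.

Lemma beval_truth (x : X) phi :
  beval (fun psi => `[< tr psi x >]) phi = `[< tr phi x >].
Proof.
elim: phi => //= [a IHa b IHb|a IHa].
  by rewrite IHa IHb -asbool_and.
by rewrite IHa -asbool_neg.
Qed.

Lemma allT (A : set X) : (forall x, A x) -> A = setT.
Proof. by move=> h; apply/seteqP; split => // x _; exact: h. Qed.

Lemma tr_imp x a b : tr (Imp a b) x <-> (tr a x -> tr b x).
Proof.
split; first by move=> h ha; apply: contrapT => nb; apply: h.
by move=> h [ha nb]; apply: nb; exact: h.
Qed.
Lemma tr_and x a b : tr (And a b) x <-> tr a x /\ tr b x. Proof. by []. Qed.
Lemma tr_neg x a : tr (Neg a) x <-> ~ tr a x. Proof. by []. Qed.
Lemma tr_next x a : tr (Next a) x <-> tr a (f x). Proof. by []. Qed.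
Lemma tr_iff x a b : tr (Iff a b) x <-> (tr a x <-> tr b x).
Proof. by rewrite /Iff tr_and !tr_imp. Qed.

Lemma soundness phi : wK4C phi -> tr phi = setT.
Proof.
elim => {phi}.
- move=> phi tphi; apply: allT => x.
  have := tphi (fun psi => `[< tr psi x >]); rewrite beval_truth.
  by move/asboolW.
- move=> a b; apply: allT => x; apply/tr_imp => /truth_box [B1 [n1 h1]].
  apply/tr_imp => /truth_box [B2 [n2 h2]].
  apply/truth_box; exists (B1 `&` B2); split; first exact: filterI.
  move=> y [B1y B2y] ynx.
  by have /tr_imp := h1 y B1y ynx; apply; exact: h2.
- move=> a; apply: allT => x; apply/tr_imp => -[ax /truth_box [B [nB hB]]].
  apply/truth_box.
  rewrite nbhsE in nB; case: nB => O [oO Ox] sOB.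
  exists O; split; first by apply: open_nbhs_nbhs.
  move=> y Oy ynx; apply/truth_box; exists O; split; first by apply: open_nbhs_nbhs.
  move=> z Oz zny; have [->|znx] := pselect (z = x) => //.
  exact: hB (sOB _ Oz) znx.
- by move=> a; apply: allT => x; apply/tr_iff.
- by move=> a b; apply: allT => x; apply/tr_iff.
- move=> a; apply: allT => x; apply/tr_imp => -[ha hb].
  have [B [nB hB]] : exists B, nbhs (f x) B /\ (forall y, B y -> y <> f x -> tr a y) by apply/truth_box; exact: hb.
  apply/truth_box; exists (f @^-1` B); split; first exact: fc.
  move=> y By _; apply/tr_next; have [->|ne] := pselect (f y = f x) => //.
  exact: hB.
- move=> a b _ hab _ ha; apply: allT => x.
  have : tr (Imp a b) x by rewrite hab.
  by move/tr_imp; apply; rewrite ha.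
- move=> a _ ha; apply: allT => x; apply/truth_box; exists setT; split.
    exact: filterT.
  by move=> y _ _; rewrite ha.
- by move=> a _ ha; apply: allT => x; apply/tr_next; rewrite ha.
Qed.
End Sound.


Section Syn.
Variables (PV : Type) (v0 : PV).
Local Notation F := (formula PV).
Local Notation D := (@wK4C PV).

Definition top : F := Neg (And (Var v0) (Neg (Var v0))).
Fixpoint conj (l : seq F) : F := if l is a :: l' then And a (conj l') else top.

Lemma beval_top v : beval v top = true.
Proof. by rewrite /=; case: (v (Var v0)). Qed.

Lemma beval_conj_cat v l1 l2 :
  beval v (conj (l1 ++ l2)) = beval v (conj l1) && beval v (conj l2).
Proof. by elim: l1 => [|a l IH] /=; [case: (v (Var v0))|rewrite IH andbA]. Qed.

Lemma mp1 A B : tautology (Imp A B) -> D A -> D B.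
Proof. by move=> t hA; apply: rule_MP (ax_taut t) hA. Qed.
Lemma mp2 A B C : tautology (Imp A (Imp B C)) -> D A -> D B -> D C.
Proof. by move=> t hA hB; apply: rule_MP (rule_MP (ax_taut t) hA) hB. Qed.

Definition consistent (G : set F) :=
  ~ exists l, (forall e, List.In e l -> G e) /\ D (Neg (conj l)).
Definition mcs (G : set F) := consistent G /\ forall a, G a \/ G (Neg a).

Lemma box_mono a b : D (Imp a b) -> D (Imp (Box a) (Box b)).
Proof. by move=> h; exact: rule_MP (ax_K a b) (rule_NecBox h). Qed.

Section MCS.
Variable G : set F.
Hypothesis hG : mcs G.

Lemma mcs_nb a : G a -> G (Neg a) -> False.
Proof.
move=> ha hna; apply: hG.1; exists [:: a; Neg a]; split.
  by move=> e /= [<-|[<-|[]]].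
apply: ax_taut => v /=; by case: (beval v a).
Qed.

Lemma mcs_thm a : D a -> G a.
Proof.
move=> da; case: (hG.2 a) => // hna; exfalso; apply: hG.1; exists [:: Neg a]; split.
  by move=> e /= [<-|[]].
apply: mp1 da => v /=; case: (v (Var v0)); by case: (beval v a).
Qed.

Lemma mcs_mp a b : G a -> D (Imp a b) -> G b.
Proof.
move=> ha dab; case: (hG.2 b) => // hnb; exfalso; apply: hG.1.
exists [:: a; Neg b]; split; first by move=> e /= [<-|[<-|[]]].
apply: mp1 dab => v /=; case: (v (Var v0)); by case: (beval v a); case: (beval v b).
Qed.

Lemma mcs_andI a b : G a -> G b -> G (And a b).
Proof.
move=> ha hb; case: (hG.2 (And a b)) => // hn; exfalso; apply: hG.1.
exists [:: a; b; Neg (And a b)]; split; first by move=> e /= [<-|[<-|[<-|[]]]].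
apply: ax_taut => v /=; by case: (beval v a); case: (beval v b).
Qed.

Lemma mcs_mp2 a b c : G a -> G b -> D (Imp (And a b) c) -> G c.
Proof. by move=> ha hb; apply: mcs_mp; exact: mcs_andI. Qed.

Lemma mcs_and a b : G (And a b) <-> G a /\ G b.
Proof.
split; last by move=> [ha hb]; exact: mcs_andI.
move=> h; split; apply: (mcs_mp h); apply: ax_taut => v /=;
  by case: (beval v a); case: (beval v b).
Qed.

Lemma mcs_neg a : G (Neg a) <-> ~ G a.
Proof.
split; first by move=> hn ha; exact: mcs_nb ha hn.
by move=> h; case: (hG.2 a).
Qed.

Lemma mcs_or a b : G (Or a b) <-> G a \/ G b.
Proof.
rewrite /Or mcs_neg mcs_and !mcs_neg; split.
  by move=> h; apply: contrapT => /not_orP [h1 h2]; apply: h.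
by move=> [h|h] [h1 h2].
Qed.

Lemma mcs_imp a b : G (Imp a b) -> G a -> G b.
Proof.
move=> h ha; apply: (mcs_mp2 h ha); apply: ax_taut => v /=;
  by case: (beval v a); case: (beval v b).
Qed.

Lemma mcs_box_mono a b : G (Box a) -> D (Imp a b) -> G (Box b).
Proof.
move=> ha dab; apply: mcs_imp ha.
by apply: mcs_mp (mcs_thm (rule_NecBox dab)) _; exact: ax_K.
Qed.

Lemma mcs_box_and a b : G (Box a) -> G (Box b) -> G (Box (And a b)).
Proof.
move=> ha hb.
have h1 : G (Box (Imp b (And a b))).
  apply: mcs_box_mono ha _; apply: ax_taut => v /=;
  by case: (beval v a); case: (beval v b).
by apply: mcs_imp hb; apply: mcs_mp h1 _; exact: ax_K.
Qed.

Lemma mcs_w4 a : G a -> G (Box a) -> G (Box (Box a)).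
Proof. by move=> ha hb; apply: mcs_mp2 ha hb _; exact: ax_w4. Qed.

Lemma mcs_iff a b : D (Iff a b) -> (G a <-> G b).
Proof.
move=> d; split => h; apply: mcs_mp h _; apply: mp1 d => v /=;
  by case: (beval v a); case: (beval v b).
Qed.

Lemma mcs_next_neg a : G (Next (Neg a)) <-> ~ G (Next a).
Proof. by rewrite -(mcs_iff (ax_NextNeg a)) mcs_neg. Qed.

Lemma mcs_next_and a b : G (Next (And a b)) <-> G (Next a) /\ G (Next b).
Proof. by rewrite (mcs_iff (ax_NextAnd a b)) mcs_and. Qed.

Lemma mcs_next_thm a : D a -> G (Next a).
Proof. by move=> d; apply: mcs_thm; exact: rule_NecNext. Qed.

Lemma mcs_next_mono a b : G (Next a) -> D (Imp a b) -> G (Next b).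
Proof.
move=> ha dab; have := mcs_next_thm dab; rewrite /Imp mcs_next_neg mcs_next_and.
move=> h; apply: contrapT => nb; apply: h; split => //.
by apply/mcs_next_neg.
Qed.

Lemma mcs_C a : G (Next a) -> G (Next (Box a)) -> G (Box (Next a)).
Proof. by move=> h1 h2; apply: mcs_mp2 h1 h2 _; exact: ax_C. Qed.

End MCS.

Lemma mcs_ext G H : mcs G -> mcs H -> (forall a, G a -> H a) -> G = H.
Proof.
move=> hG hH s; apply/seteqP; split => // a ha.
apply: contrapT => nga; have := s _ (proj2 (mcs_neg hG a) nga).
by move/(mcs_neg hH).
Qed.

Lemma mcs_diff G H : mcs G -> mcs H -> G <> H -> exists c, G c /\ ~ H c.
Proof.
move=> hG hH ne; apply: contrapT => h; apply: ne; apply: mcs_ext => // a ga.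
by apply: contrapT => nha; apply: h; exists a.
Qed.

Lemma In_cat (e : F) l1 l2 : List.In e (l1 ++ l2) -> List.In e l1 \/ List.In e l2.
Proof.
elim: l1 => [|a l IH] /=; first by right.
by move=> [->|/IH [h|h]]; [left; left|left; right|right].
Qed.

Lemma split_list (G : set F) a l : (forall e, List.In e l -> (G `|` [set a]) e) ->
  exists l', (forall e, List.In e l' -> G e) /\ D (Imp (And (conj l') a) (conj l)).
Proof.
elim: l => [|e l IH] hl.
  exists [::]; split => //; apply: ax_taut => v /=; by case: (v (Var v0)); case: (beval v a).
have [l' [h1 h2]] := IH (fun e' he' => hl e' (or_intror he')).
case: (hl e (or_introl erefl)) => [ge|->].
  exists (e :: l'); split; first by move=> e' /= [<-|/h1].
  apply: mp1 h2 => v /=.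
  by case: (beval v e); case: (beval v (conj l')); case: (beval v a); case: (beval v (conj l)).
exists l'; split => //; apply: mp1 h2 => v /=.
by case: (beval v (conj l')); case: (beval v a); case: (beval v (conj l)).
Qed.

Lemma incons_split (G : set F) a : consistent G ->
  ~ consistent (G `|` [set a]) -> ~ consistent (G `|` [set Neg a]) -> False.
Proof.
move=> cG /contrapT [l1 [h1 d1]] /contrapT [l2 [h2 d2]].
have [m1 [i1 e1]] := split_list h1.
have [m2 [i2 e2]] := split_list h2.
apply: cG; exists (m1 ++ m2); split; first by move=> e /In_cat [/i1|/i2].
have f1 : D (Neg (And (conj m1) a)).
  apply: mp2 e1 d1 => v /=; by case: (beval v (conj m1)); case: (beval v a); case: (beval v (conj l1)).
have f2 : D (Neg (And (conj m2) (Neg a))).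
  apply: mp2 e2 d2 => v /=; by case: (beval v (conj m2)); case: (beval v a); case: (beval v (conj l2)).
apply: mp2 f1 f2 => v; rewrite /= beval_conj_cat.
by case: (beval v (conj m1)); case: (beval v (conj m2)); case: (beval v a).
Qed.

Lemma chain_list (S : set F) (Fam : set (set F)) l :
  total_on Fam subset ->
  (forall e, List.In e l -> (S `|` \bigcup_(X in Fam) X) e) ->
  (forall e, List.In e l -> S e) \/ exists A, Fam A /\ forall e, List.In e l -> (S `|` A) e.
Proof.
move=> tot; elim: l => [|e l IH] hl; first by left.
have := IH (fun e' he' => hl e' (or_intror he')).
case: (hl e (or_introl erefl)) => [se|[A FA Ae]].
  move=> [h|[A [FA h]]]; first by left => e' /= [<-|/h].
  by right; exists A; split => // e' /= [<-|/h]; [left|].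
move=> [h|[B [FB h]]].
  right; exists A; split => // e' /= [<-|/h]; [right|left] => //.
right; case: (tot A B FA FB) => sAB.
  exists B; split => // e' /= [<-|/h] //; right; exact: sAB.
exists A; split => // e' /= [<-|/h]; [right|] => //.
by case => [?|/sAB ?]; [left|right].
Qed.

Lemma lindenbaum S : consistent S -> exists G, mcs G /\ S `<=` G.
Proof.
move=> cS.
have [] := @Zorn_bigcup F [set A : set F | consistent (S `|` A)].
  move=> Fam FP tot [l [hl dl]].
  case: (chain_list tot hl) => [h|[A [FA h]]].
    by apply: cS; exists l.
  by apply: (FP A FA); exists l.
move=> A [PA maxA]; exists (S `|` A); split; last by move=> x Sx; left.
split => // a; apply: contrapT => /not_orP [na nna].
apply: (incons_split (a:=a) PA).
  move=> c; apply: (maxA (A `|` [set a])); last by move: c; rewrite /= setUA.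
  split; first by move=> x Ax; left.
  by move=> /(_ a (or_intror erefl)) Aa; apply: na; right.
move=> c; apply: (maxA (A `|` [set Neg a])); last by move: c; rewrite /= setUA.
split; first by move=> x Ax; left.
by move=> /(_ (Neg a) (or_intror erefl)) Aa; apply: nna; right.
Qed.

Lemma box_list (G : set F) c l : mcs G ->
  (forall e, List.In e l -> ([set t | G (Box t)] `|` [set Neg c]) e) ->
  exists A, G (Box A) /\ D (Imp (And A (Neg c)) (conj l)).
Proof.
move=> hG; elim: l => [|e l IH] hl.
  exists top; split.
    apply: mcs_thm => //; apply: rule_NecBox; apply: ax_taut => v /=; by case: (v (Var v0)).
  apply: ax_taut => v /=; by case: (v (Var v0)); case: (beval v c).
have [A [hA dA]] := IH (fun e' he' => hl e' (or_intror he')).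
case: (hl e (or_introl erefl)) => [ge|->].
  exists (And e A); split; first exact: mcs_box_and.
  apply: mp1 dA => v /=.
  by case: (beval v e); case: (beval v A); case: (beval v c); case: (beval v (conj l)).
exists A; split => //; apply: mp1 dA => v /=.
by case: (beval v A); case: (beval v c); case: (beval v (conj l)).
Qed.

Lemma exist_box G c : mcs G -> G (Neg (Box c)) ->
  exists H, mcs H /\ (forall t, G (Box t) -> H t) /\ H (Neg c).
Proof.
move=> hG hn.
have cS : consistent ([set t | G (Box t)] `|` [set Neg c]).
  move=> [l [hl dl]].
  have [A [hA dA]] := box_list hG hl.
  have dAc : D (Imp A c).
    apply: mp2 dA dl => v /=; by case: (beval v A); case: (beval v c); case: (beval v (conj l)).
  by apply: (mcs_nb hG) hn; apply: mcs_box_mono hA dAc.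
have [H [hH sH]] := lindenbaum cS.
exists H; split => //; split; first by move=> t ht; apply: sH; left.
by apply: sH; right.
Qed.

Definition nxt (G : set F) : set F := fun a => G (Next a).

Lemma mcs_nxt G : mcs G -> mcs (nxt G).
Proof.
move=> hG; split; last first.
  by move=> a; rewrite /nxt; case: (hG.2 (Next a)) => h; [left|right; apply/(mcs_next_neg hG); exact/(mcs_neg hG)].
move=> [l [hl dl]].
have : G (Next (conj l)).
  elim: l hl {dl} => [|e l IH] hl.
    by apply: mcs_next_thm => //; apply: ax_taut => v /=; case: (v (Var v0)).
  apply/(mcs_next_and hG); split; first exact: hl e (or_introl erefl).
  exact: IH (fun e' he' => hl e' (or_intror he')).
by apply/(mcs_next_neg hG); apply: mcs_next_thm.
Qed.

Definition Rc (x y : set F) := forall t, x (Box t) -> y t.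
Definition Rpc (x y : set F) := x = y \/ Rc x y.
Definition clu (x y : set F) := x = y \/ (Rc x y /\ Rc y x).

Lemma wtrans x y z : mcs x -> mcs y -> mcs z -> Rc x y -> Rc y z -> x <> z -> Rc x z.
Proof.
move=> hx hy hz rxy ryz nxz t xt.
have [c [xc nzc]] := mcs_diff hx hz nxz.
have h1 : x (Box (Or t c)).
  apply: mcs_box_mono xt _ => //; apply: ax_taut => v /=; by case: (beval v t); case: (beval v c).
have h2 : x (Or t c) by apply/(mcs_or hx); right.
have := ryz _ (rxy _ (mcs_w4 hx h2 h1)).
by move/(mcs_or hz) => [].
Qed.

Lemma Rpc_trans x y z : mcs x -> mcs y -> mcs z -> Rpc x y -> Rpc y z -> Rpc x z.
Proof.
move=> hx hy hz [->|rxy] [<-|ryz]; try by [left|right].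
have [->|ne] := pselect (x = z); first by left.
by right; exact: wtrans rxy ryz ne.
Qed.

Lemma clu_sym x y : clu x y -> clu y x.
Proof. by move=> [->|[a b]]; [left|right]. Qed.

Lemma clu_trans x y z : mcs x -> mcs y -> mcs z -> clu x y -> clu y z -> clu x z.
Proof.
move=> hx hy hz cxy cyz.
have [->|ne] := pselect (x = z); first by left.
right; case: cxy => [exy|[a b]]; case: cyz => [eyz|[c d]].
- by exfalso; apply: ne; rewrite exy eyz.
- by rewrite exy.
- by rewrite -eyz.
split; first exact: wtrans a c ne.
by apply: wtrans d b _ => // e; apply: ne.
Qed.

Lemma nxt_mono x y : mcs x -> mcs y -> Rc x y -> nxt x = nxt y \/ Rc (nxt x) (nxt y).
Proof.
move=> hx hy rxy; have [->|ne] := pselect (nxt x = nxt y); first by left.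
right; have [c [xc nyc]] := mcs_diff (mcs_nxt hx) (mcs_nxt hy) ne.
move=> t xt; rewrite /nxt in xc nyc xt *.
have h1 : x (Next (Box (Or t c))).
  apply: mcs_next_mono xt _ => //; apply: box_mono; apply: ax_taut => v /=.
  by case: (beval v t); case: (beval v c).
have h2 : x (Next (Or t c)).
  apply: mcs_next_mono xc _ => //; apply: ax_taut => v /=; by case: (beval v t); case: (beval v c).
have := rxy _ (mcs_C hx h2 h1).
by move/(mcs_or (mcs_nxt hy)) => [].
Qed.

Lemma strict_K4 x y t : mcs x -> mcs y -> Rc x y -> ~ (y = x \/ Rc y x) ->
  x (Box t) -> y (Box t).
Proof.
move=> hx hy rxy ns xt; apply: contrapT => /(mcs_neg hy) /(exist_box hy) [z [hz [ryz nzt]]].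
have [ezx|nxz] := pselect (x = z).
  by apply: ns; right; rewrite ezx.
by apply: (mcs_nb hz) nzt; exact: wtrans rxy ryz nxz _ xt.
Qed.

Lemma clu_nxt x y : mcs x -> mcs y -> clu x y -> clu (nxt x) (nxt y).
Proof.
move=> hx hy [->|[a b]]; first by left.
case: (nxt_mono hx hy a) => [->|c]; first by left.
case: (nxt_mono hy hx b) => [->|d]; first by left.
by right.
Qed.

Lemma mcs_iter k x : mcs x -> mcs (iter k nxt x).
Proof. by move=> hx; elim: k => //= k IH; exact: mcs_nxt. Qed.

Lemma clu_iter k x y : mcs x -> mcs y -> clu x y -> clu (iter k nxt x) (iter k nxt y).
Proof.
move=> hx hy c; elim: k => //= k IH.
by apply: clu_nxt => //; exact: mcs_iter.
Qed.

Lemma strict_clu x y x' y' : mcs x -> mcs y -> mcs x' -> mcs y' ->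
  Rc x y -> ~ clu x y -> clu x x' -> clu y y' -> Rc x' y' /\ ~ (y' = x' \/ Rc y' x').
Proof.
move=> hx hy hx' hy' rxy ncl cx cy.
have rp : Rpc x' y'.
  apply: (@Rpc_trans x' x y') => //.
    by case: (clu_sym cx) => [->|[a _]]; [left|right].
  apply: (@Rpc_trans x y y') => //; first by right.
  by case: cy => [->|[a _]]; [left|right].
have ncl' : ~ clu x' y'.
  move=> c; apply: ncl; apply: (@clu_trans x x' y) => //.
  by apply: (@clu_trans x' y' y) => //; exact: clu_sym.
case: rp => [e|r]; first by exfalso; apply: ncl'; left.
split => // -[e|r']; apply: ncl'; [left|right] => //.
Qed.

End Syn.


Section Model.
Variables (PV : Type) (v0 : PV) (phi0 : formula PV).
Local Notation F := (formula PV).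
Local Notation mcs := (@mcs PV v0).
Local Notation D := (@wK4C PV).
Local Notation nxt := (@nxt PV).
Local Notation clu := (@clu PV).
Local Notation Rc := (@Rc PV).

Fixpoint subl (f : F) : seq F := f :: match f with
  | Var _ => [::] | And a b => subl a ++ subl b | Neg a => subl a
  | Box a => subl a | Next a => subl a end.
Fixpoint nd (f : F) : nat := match f with
  | Var _ => 0 | And a b => maxn (nd a) (nd b) | Neg a => nd a
  | Box a => nd a | Next a => (nd a).+1 end.

Lemma In_catl (e : F) l1 l2 : List.In e l1 -> List.In e (l1 ++ l2).
Proof. by elim: l1 => //= a l IH [->|h]; [left|right; exact: IH]. Qed.
Lemma In_catr (e : F) l1 l2 : List.In e l2 -> List.In e (l1 ++ l2).
Proof. by elim: l1 => //= a l IH h; right; exact: IH. Qed.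

Lemma sub_trans a b c : List.In a (subl b) -> List.In b (subl c) -> List.In a (subl c).
Proof.
move=> hab; elim: c => [p|c1 IH1 c2 IH2|c1 IH|c1 IH|c1 IH] /= [e|h].
- by rewrite -e in hab.
- by case: h.
- by rewrite -e in hab.
- by right; case/In_cat: h => h; [apply: In_catl; exact: IH1|apply: In_catr; exact: IH2].
- by rewrite -e in hab.
- by right; exact: IH.
- by rewrite -e in hab.
- by right; exact: IH.
- by rewrite -e in hab.
- by right; exact: IH.
Qed.

Lemma sub_self a : List.In a (subl a).
Proof. by case: a => *; left. Qed.

Definition Gs (f : F) := exists j c, List.In c (subl phi0) /\ f = iter j (@Next PV) c.
Definition Sk k f := Gs f /\ (nd f <= k)%N.

Lemma nd_iter j c : nd (iter j (@Next PV) c) = j + nd c.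
Proof. by elim: j => //= j ->. Qed.

Lemma Gs_sub a b : Gs b -> List.In a (subl b) -> (forall c, b <> Next c) -> Gs a.
Proof.
move=> [[|j] [c [hc e]]] hab nn; last by exfalso; apply: (nn (iter j (@Next PV) c)).
by exists 0, a; split => //; apply: sub_trans hab _; rewrite e.
Qed.

Lemma Sk_and k a b : Sk k (And a b) -> Sk k a /\ Sk k b.
Proof.
move=> [g h]; rewrite /= geq_max in h; case/andP: h => h1 h2.
split; split => //.
  by apply: (Gs_sub g) => //=; right; apply: In_catl; exact: sub_self.
by apply: (Gs_sub g) => //=; right; apply: In_catr; exact: sub_self.
Qed.
Lemma Sk_neg k a : Sk k (Neg a) -> Sk k a.
Proof. by move=> [g h]; split => //; apply: (Gs_sub g) => //=; right; exact: sub_self. Qed.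
Lemma Sk_box k a : Sk k (Box a) -> Sk k a.
Proof. by move=> [g h]; split => //; apply: (Gs_sub g) => //=; right; exact: sub_self. Qed.
Lemma Sk_next k a : Sk k (Next a) -> (0 < k)%N /\ Sk k.-1 a.
Proof.
move=> [[[|j] [c [hc e]]] h] /=; rewrite /= in h.
  split; first by lia.
  split; last by lia.
  by exists 0, a; split => //; apply: sub_trans hc; rewrite /= in e; rewrite -e /=; right; exact: sub_self.
split; first by lia.
split; last by lia.
by exists j, c; split => //; case: e.
Qed.
Lemma Sk_nextI k a : (0 < k)%N -> Sk k.-1 a -> Sk k (Next a).
Proof.
move=> k0 [[j [c [hc e]]] h]; split; last by rewrite /=; lia.
by exists j.+1, c; split => //=; rewrite e.
Qed.
Definition n := nd phi0.
Definition sl : seq F := List.flat_map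
  (fun c => List.map (fun j => iter j (@Next PV) c) (List.seq 0 n.+1)) (subl phi0).
Definition m := size sl.
Lemma size_len (l : seq F) : size l = List.length l.
Proof. by elim: l => //= a l ->. Qed.
Definition nthf (i : 'I_m) : F := List.nth i sl (Var v0).

Lemma cover k f : Sk k f -> (k <= n)%N -> exists i : 'I_m, nthf i = f.
Proof.
move=> [[j [c [hc e]]] h] kn.
have jn : (j <= n)%N by move: h; rewrite e nd_iter; lia.
have inl : List.In f sl.
  apply/List.in_flat_map; exists c; split => //.
  rewrite e; apply: (List.in_map (fun j => iter j (@Next PV) c)); apply/List.in_seq; lia.
have [i0 [lt0 e0]] := List.In_nth sl f (Var v0) inl.
have lt : (i0 < m)%N by rewrite /m size_len; apply/ltP.
by exists (Ordinal lt).
Qed.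

Local Notation Typ := {set 'I_m}.
Local Notation TSet := {set {set 'I_m}}.
Local Notation Hist := {ffun 'I_n.+1 -> {set {set 'I_m}}}.
Local Notation HT := (({ffun 'I_n.+1 -> {set {set 'I_m}}} * {set 'I_m})%type).

Definition amem (a : Typ) f := exists i : 'I_m, i \in a /\ nthf i = f.
Definition enc k (x : set F) : Typ := [set i : 'I_m | `[< Sk k (nthf i) /\ x (nthf i) >]].

Lemma amem_enc k x f : (k <= n)%N -> amem (enc k x) f <-> Sk k f /\ x f.
Proof.
move=> kn; split.
  by move=> [i [hi e]]; move: hi; rewrite inE => /asboolP; rewrite e.
move=> h; have [i e] := cover h.1 kn; exists i; split => //.
by rewrite inE; apply/asboolP; rewrite e.
Qed.

Definition TS_ k (y : set F) : TSet :=
  [set e : Typ | `[< exists z, mcs z /\ clu y z /\ enc k z = e >]].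
Definition Hk k x : Hist :=
  [ffun j : 'I_n.+1 => if (j <= k)%N then TS_ j (iter (k - j) nxt x) else finset.set0].
Definition Prof k x : HT := (Hk k x, enc k x).
Definition trunc k (H : Hist) : Hist := [ffun j : 'I_n.+1 => if (j <= k)%N then H j else finset.set0].
Definition proj k (a : Typ) : Typ :=
  [set i : 'I_m | `[< Sk k.-1 (nthf i) /\ amem a (Next (nthf i)) >]].
Definition Fd k (p : HT) : HT := (trunc k.-1 p.1, proj k p.2).

Lemma TS_clu k y y' : mcs y -> mcs y' -> clu y y' -> TS_ k y = TS_ k y'.
Proof.
move=> hy hy' c; apply/setP => e; rewrite !inE; apply: asbool_equiv_eq.
split => -[z [hz [cz ez]]]; exists z; split => //; split => //.
  by apply: (clu_trans hy' hy hz) => //; exact: clu_sym.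
exact: (clu_trans hy hy' hz).
Qed.

Lemma Hk_clu k x x' : mcs x -> mcs x' -> clu x x' -> Hk k x = Hk k x'.
Proof.
move=> hx hx' c; apply/ffunP => j; rewrite !ffunE; case: ifP => // _.
exact: (TS_clu _ (mcs_iter (k - j) hx) (mcs_iter (k - j) hx') (clu_iter (k - j) hx hx' c)).
Qed.

Lemma Hk_top k x : (k <= n)%N -> Hk k x (inord k) = TS_ k x.
Proof. by move=> kn; rewrite ffunE inordK // leqnn subnn. Qed.

Lemma enc_in_TS k x : mcs x -> enc k x \in TS_ k x.
Proof. by move=> hx; rewrite inE; apply/asboolP; exists x; split => //; split => //; left. Qed.

Lemma Fd_Prof k x : (0 < k)%N -> (k <= n)%N -> mcs x -> Fd k (Prof k x) = Prof k.-1 (nxt x).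
Proof.
move=> k0 kn hx; rewrite /Fd /Prof /=; congr pair.
  apply/ffunP => j; rewrite !ffunE.
  case: ifP => jk; last by [].
  have -> : (j <= k)%N by lia.
  have -> : (k - j = (k.-1 - j).+1)%N by lia.
  by rewrite iterSr.
apply/setP => i; rewrite !inE; apply: asbool_equiv_eq.
have kn' : (k <= n)%N by [].
rewrite amem_enc //; split; first by move=> [h1 [h2 h3]].
by move=> [h1 h2]; split => //; split => //; exact: Sk_nextI.
Qed.

Definition imp (a b : Typ) := forall t, amem a (Box t) -> amem b t /\ amem b (Box t).
Definition allimp (K K' : TSet) := forall a b, a \in K -> b \in K' -> imp a b.
Definition same (p q : HT) := p.1 = q.1 /\ (p.2 <> q.2 \/ imp p.2 p.2).
Definition topR k (p q : HT) := allimp (p.1 (inord k)) (q.1 (inord k)).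
Fixpoint Rk (k : nat) (p q : HT) {struct k} : Prop :=
  (topR k p q /\
    match k with 0 => True | k'.+1 => Fd k p = Fd k q \/ Rk k' (Fd k p) (Fd k q) end)
  \/ same p q.
Definition Rplus k p q := p = q \/ Rk k p q.
Definition fpart k p q := match k with 0 => True | k'.+1 => Rplus k' (Fd k p) (Fd k q) end.
Definition real k (p : HT) := exists x, mcs x /\ Prof k x = p.

Lemma Rk_cases k p q : Rk k p q -> (topR k p q /\ fpart k p q) \/ same p q.
Proof. by case: k. Qed.
Lemma Rk_intro k p q : topR k p q -> fpart k p q -> Rk k p q.
Proof. by case: k => [|k] h1 h2; left. Qed.
Lemma Rk_same k p q : same p q -> Rk k p q.
Proof. by case: k => [|k] h; right. Qed.
Lemma same_Rk k p q : p.1 = q.1 -> p.2 <> q.2 -> Rk k p q.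
Proof. by move=> e ne; apply: Rk_same; split => //; left. Qed.

Lemma real_in k p : (k <= n)%N -> real k p -> p.2 \in p.1 (inord k).
Proof. by move=> kn [x [hx <-]] /=; rewrite Hk_top //; exact: enc_in_TS. Qed.

Lemma real_Fd k p : (0 < k)%N -> (k <= n)%N -> real k p -> real k.-1 (Fd k p).
Proof.
move=> k0 kn [x [hx <-]]; exists (nxt x); split; first exact: mcs_nxt.
by rewrite Fd_Prof.
Qed.

Lemma same_Fd k p q : p.1 = q.1 -> Rplus k.-1 (Fd k p) (Fd k q).
Proof.
move=> e; rewrite /Fd e; have [->|ne] := pselect (proj k p.2 = proj k q.2); first by left.
by right; apply: same_Rk.
Qed.

Lemma Rk_Fd k p q : (0 < k)%N -> Rk k p q -> Rplus k.-1 (Fd k p) (Fd k q).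
Proof.
case: k => // k _ /Rk_cases [[_ h]|[e _]] //.
exact: same_Fd.
Qed.

Lemma imp_trans a b c : imp a b -> imp b c -> imp a c.
Proof. by move=> h1 h2 t /h1 [_ /h2]. Qed.

Lemma Rplus_trans_gen k :
  (forall p q r, real k p -> real k q -> real k r -> Rk k p q -> Rk k q r -> p <> r -> Rk k p r) ->
  forall p q r, real k p -> real k q -> real k r -> Rplus k p q -> Rplus k q r -> Rplus k p r.
Proof.
move=> WT p q r rp rq rr [->|h1] [<-|h2]; try by [left|right].
have [->|ne] := pselect (p = r); first by left.
by right; exact: WT h1 h2 ne.
Qed.

Lemma same_same p q r : same p q -> same q r -> p <> r -> same p r.
Proof.
move=> [e1 _] [e2 _] npr; split; first by rewrite e1.
left => e; apply: npr; move: e1 e2 e.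
by case: p => ? ?; case: q => ? ?; case: r => ? ? /= -> -> ->.
Qed.
Lemma top_same_l k p q r : topR k p q -> q.1 = r.1 -> topR k p r.
Proof. by rewrite /topR => h <-. Qed.
Lemma top_same_r k p q r : p.1 = q.1 -> topR k q r -> topR k p r.
Proof. by rewrite /topR => ->. Qed.
Lemma top_trans k p q r : (k <= n)%N -> real k q -> topR k p q -> topR k q r -> topR k p r.
Proof.
move=> kn rq t1 t2 a c ha hc.
exact: imp_trans (t1 _ _ ha (real_in kn rq)) (t2 _ _ (real_in kn rq) hc).
Qed.

Lemma WT k : (k <= n)%N -> forall p q r, real k p -> real k q -> real k r ->
  Rk k p q -> Rk k q r -> p <> r -> Rk k p r.
Proof.
elim: k => [|k IH] kn p q r rp rq rr h1 h2 npr.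
  case/Rk_cases: h1 => [[t1 _]|s1]; case/Rk_cases: h2 => [[t2 _]|s2].
  - by apply: Rk_intro => //; exact: top_trans t1 t2.
  - by apply: Rk_intro => //; exact: top_same_l t1 s2.1.
  - by apply: Rk_intro => //; exact: top_same_r s1.1 t2.
  - by apply: Rk_same; exact: same_same s1 s2 npr.
have kn' : (k <= n)%N by lia.
have RT := Rplus_trans_gen (IH kn').
have rFp := real_Fd (ltn0Sn k) kn rp.
have rFq := real_Fd (ltn0Sn k) kn rq.
have rFr := real_Fd (ltn0Sn k) kn rr.
case/Rk_cases: h1 => [[t1 f1]|s1]; case/Rk_cases: h2 => [[t2 f2]|s2].
- by apply: Rk_intro; [exact: top_trans t1 t2|exact: (RT _ _ _ rFp rFq rFr f1 f2)].
- apply: Rk_intro; first exact: top_same_l t1 s2.1.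
  exact: (RT _ _ _ rFp rFq rFr f1 (same_Fd _ s2.1)).
- apply: Rk_intro; first exact: top_same_r s1.1 t2.
  exact: (RT _ _ _ rFp rFq rFr (same_Fd _ s1.1) f2).
- by apply: Rk_same; exact: same_same s1 s2 npr.
Qed.

Lemma TR k p q t : (k <= n)%N -> real k p -> real k q -> Rk k p q ->
  Sk k (Box t) -> amem p.2 (Box t) -> amem q.2 t.
Proof.
move=> kn rp rq /Rk_cases [[tp _]|[e h]] hS hb.
  exact: (tp _ _ (real_in kn rp) (real_in kn rq) _ hb).1.
have [eq|ne] := pselect (p.2 = q.2).
  case: h => [//|hi]; rewrite -eq; exact: (hi _ hb).1.
case: rp => x [hx ep].
have := real_in kn rq; rewrite -e -ep /= Hk_top // inE => /asboolP [z [hz [cz ez]]].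
have xz : x <> z by move=> exz; apply: ne; rewrite -ep -ez -exz.
case: cz => [//|[rxz _]].
move: hb; rewrite -ep /= amem_enc // => -[_ xb].
by rewrite -ez amem_enc //; split; [exact: Sk_box|exact: rxz].
Qed.

Lemma Lprof k x y : (k <= n)%N -> mcs x -> mcs y -> Rc x y -> Rk k (Prof k x) (Prof k y).
Proof.
elim: k x y => [|k IH] x y kn hx hy rxy; have [c|nc] := pselect (clu x y).
- apply: Rk_same; split; first exact: Hk_clu.
  have [e|ne] := pselect (enc 0 x = enc 0 y); last by left.
  right => t /=; rewrite amem_enc // => -[hS xb]; split; last by split.
  by rewrite e amem_enc //; split; [exact: Sk_box|exact: rxy].
- apply: Rk_intro => //; rewrite /topR /= !Hk_top // => a b.
  rewrite !inE; move=> [x' [hx' [cx' ea]]] [y' [hy' [cy' eb]]] t; rewrite -ea -eb.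
  have [r' ns] := strict_clu hx hy hx' hy' rxy nc cx' cy'.
  rewrite !amem_enc // => -[hS xb]; split; split.
  + exact: Sk_box. + exact: r' _ xb. + done. + exact: strict_K4 hx' hy' r' ns xb.
- apply: Rk_same; split; first exact: Hk_clu.
  have [e|ne] := pselect (enc k.+1 x = enc k.+1 y); last by left.
  right => t /=; rewrite amem_enc // => -[hS xb]; split; last by split.
  by rewrite e amem_enc //; split; [exact: Sk_box|exact: rxy].
- have kn' : (k <= n)%N by lia.
  apply: Rk_intro.
    rewrite /topR /= !Hk_top // => a b.
    rewrite !inE; move=> [x' [hx' [cx' ea]]] [y' [hy' [cy' eb]]] t; rewrite -ea -eb.
    have [r' ns] := strict_clu hx hy hx' hy' rxy nc cx' cy'.
    rewrite !amem_enc // => -[hS xb]; split; split.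
    + exact: Sk_box. + exact: r' _ xb. + done. + exact: strict_K4 hx' hy' r' ns xb.
  rewrite /fpart !Fd_Prof //.
  case: (nxt_mono hx hy rxy) => [->|r]; first by left.
  by right; apply: IH => //; exact: mcs_nxt.
Qed.

Local Notation Pt := (('I_n.+1 * HT)%type).
Local Notation Z := ((('I_n.+1 * HT) * bool)%type).

Definition realp (p : Pt) := real p.1 p.2.
Definition Rp (p q : Pt) := p.1 = q.1 /\ Rk p.1 p.2 q.2.
Definition valid (z : Z) := realp z.1 /\ (z.2 = false \/ Rp z.1 z.1).
Definition le (z w : Z) := z = w \/ (valid z /\ valid w /\ Rp z.1 w.1).
Definition Fp (p : Pt) : Pt := if (p.1 : nat) is k.+1 then (inord k, Fd k.+1 p.2) else p.
Definition fz (z : Z) : Z :=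
  if `[< valid z >] then (Fp z.1, z.2 && `[< Rp (Fp z.1) (Fp z.1) >]) else z.
Definition nu (v : PV) (z : Z) : Prop := amem z.1.2.2 (Var v).

Lemma le_refl z : le z z. Proof. by left. Qed.

Lemma le_trans z w u : le z w -> le w u -> le z u.
Proof.
move=> [->|[vz [vw [e1 r1]]]] // [<-|[_ [vu [e2 r2]]]]; first by right.
have [e|ne] := pselect (z.1 = u.1).
  have [e'|ne2] := pselect (z.2 = u.2).
    by left; rewrite (surjective_pairing z) (surjective_pairing u) e e'.
  right; split => //; split => //; rewrite -e.
  case: vz => _ [hz|hz] //; case: vu => _ [hu|hu] //; last by rewrite e.
  by exfalso; apply: ne2; rewrite hz hu.
right; split => //; split => //.
split; first by rewrite e1.
have kn : (z.1.1 <= n)%N by rewrite -ltnS ltn_ord.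
apply: (WT kn vz.1 _ _ r1) => //.
- by rewrite e1; exact: vw.1.
- by rewrite e1 e2; exact: vu.1.
- by rewrite e1.
- by move=> e; apply: ne; rewrite (surjective_pairing z.1) (surjective_pairing u.1) e e1 e2.
Qed.


Lemma lvl_le (p : Pt) : (p.1 <= n)%N.
Proof. by rewrite -ltnS ltn_ord. Qed.

Lemma realp_Fp p : realp p -> realp (Fp p).
Proof.
rewrite /Fp /realp; case E: (nat_of_ord p.1) => [|k] rp; first by rewrite E.
have kn : (k < n.+1)%N by have := lvl_le p; rewrite E; lia.
rewrite /= inordK //.
have kn2 : (k.+1 <= n)%N by rewrite -E; exact: lvl_le.
exact: real_Fd (ltn0Sn k) kn2 rp.
Qed.

Lemma Rp_Fp p q : realp p -> Rp p q -> Fp p = Fp q \/ Rp (Fp p) (Fp q).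
Proof.
move=> rp [e r]; rewrite /Fp -e; move: r; rewrite /Rp; case E: (nat_of_ord p.1) => [|k] r.
  by right; split => //; rewrite E.
have kn : (k < n.+1)%N by have := lvl_le p; rewrite E; lia.
case: (Rk_Fd (ltn0Sn k) r) => [->|h]; first by left.
by right; split => //=; rewrite inordK.
Qed.

Lemma fz_valid z : valid z -> valid (fz z).
Proof.
move=> vz; rewrite /fz (asboolT vz); split; first exact: realp_Fp vz.1.
have [h|h] := pselect (Rp (Fp z.1) (Fp z.1)); first by right.
by left; rewrite /= (asboolF h) andbF.
Qed.

Lemma fz_mono z w : le z w -> le (fz z) (fz w).
Proof.
move=> [->|[vz [vw r]]]; first by left.
have vz' := fz_valid vz; have vw' := fz_valid vw.
move: vz' vw'; rewrite /fz (asboolT vz) (asboolT vw) => vz' vw'.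
case: (Rp_Fp vz.1 r) => [e|h]; last by right.
rewrite -e in vw' *.
have [eb|nb] := pselect ((z.2 && `[< Rp (Fp z.1) (Fp z.1) >]) = (w.2 && `[< Rp (Fp z.1) (Fp z.1) >])).
  by left; rewrite eb.
right; split => //; split => //=.
by apply/asboolP; move: nb; case: (`[< Rp (Fp z.1) (Fp z.1) >]); rewrite ?andbF.
Qed.

Lemma amem_proj k a t : (k <= n)%N -> Sk k.-1 t -> (amem (proj k a) t <-> amem a (Next t)).
Proof.
move=> kn hS; split.
  by move=> [i [hi e]]; move: hi; rewrite inE => /asboolP [_]; rewrite e.
move=> h; have [i e] := cover hS (leq_trans (leq_pred k) kn).
by exists i; split => //; rewrite inE; apply/asboolP; rewrite e.
Qed.

Local Notation XT := (@alex Z le).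

Lemma realp_ex (p : Pt) : realp p -> exists x, mcs x /\ p.2 = Prof p.1 x.
Proof. by move=> [x [hx e]]; exists x. Qed.

Lemma truthL psi : forall z : XT, valid z -> Sk z.1.1 psi ->
  (truth (X := XT) fz nu psi z <-> amem z.1.2.2 psi).
Proof.
have kn z : ((z : Z).1.1 <= n)%N by exact: lvl_le.
elim: psi => [v|a IHa b IHb|a IHa|a IHa|a IHa] z vz hS.
- by [].
- have [sa sb] := Sk_and hS.
  have [x [hx ex]] := realp_ex vz.1.
  rewrite /= (IHa z vz sa) (IHb z vz sb) ex /= !amem_enc //.
  rewrite (mcs_and hx); split; [by move=> [[]] ? ? [] ? ?|by move=> [? [? ?]]].
- have sa := Sk_neg hS.
  have [x [hx ex]] := realp_ex vz.1.
  have := IHa z vz sa; rewrite ex /= !amem_enc // => ih.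
  rewrite (mcs_neg hx); split.
    by move=> h; split => // xa; apply: h; apply/ih.
  by move=> [_ h] /ih [].
- have sa := Sk_box hS.
  have [x [hx ex]] := realp_ex vz.1.
  have cl := alex_closure le_refl le_trans.
  change (~ closure ((~` truth (X := XT) fz nu a) `\ z) z <-> amem z.1.2.2 (Box a)).
  split.
    move=> h; apply: contrapT => nb.
    have nxb : ~ x (Box a) by move=> xb; apply: nb; rewrite ex /= amem_enc.
    have [y [hy [rxy ya]]] := exist_box hx (proj2 (mcs_neg hx _) nxb).
    pose q : Pt := (z.1.1, Prof z.1.1 y).
    have rq : Rp z.1 q by split => //=; rewrite ex; exact: Lprof.
    pose w : Z := (q, if `[< q = z.1 >] then ~~ z.2 else false).
    have vw : valid w.
      split; first by exists y.
      rewrite /w; case: (pselect (q = z.1)) => [e|ne].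
        by right; move: rq; rewrite /= e.
      by left; rewrite /= asboolF.
    apply: h; apply/cl; exists w; split; first by right.
    split.
      move=> /(IHa w vw sa); rewrite /= amem_enc // => -[_ yta].
      exact: (mcs_nb hy) yta ya.
    move=> /= wz; rewrite /w in wz; case: (pselect (q = z.1)) wz => [e|ne] wz.
      by move: wz; rewrite (asboolT e) => /(congr1 snd) /=; case: (z.2).
    by apply: ne; rewrite -wz.
  move=> hb /cl [w [[e|[_ [vw [e1 r1]]]] [nta wz]]]; first by apply: wz; rewrite e.
  apply: nta; apply/(IHa w vw); first by rewrite -e1.
  apply: (TR (kn z) vz.1 _ r1 hS hb).
  by rewrite e1; exact: vw.1.
- have [k0 sa] := Sk_next hS.
  have vz' := fz_valid vz.
  move: vz'; rewrite /fz (asboolT vz) /Fp.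
  case E: (nat_of_ord z.1.1) k0 sa => [//|k] _ sa vz'.
  have kn' : (k < n.+1)%N by have := kn z; rewrite E; lia.
  change (truth (X := XT) fz nu a (fz z) <-> amem z.1.2.2 (Next a)).
  rewrite /fz (asboolT vz) /Fp E (IHa _ vz') /=; last by rewrite inordK.
  by rewrite amem_proj // -E.
Qed.

End Model.


Lemma completeness (PV : Type) (v0 : PV) (phi : formula PV) :
  (forall (X : topologicalType) (f : X -> X),
      finite_set [set: X] -> continuous f -> valid_on f phi) -> wK4C phi.
Proof.
move=> H; apply: contrapT => nd.
have cS : consistent v0 [set Neg phi].
  move=> [l [hl dl]]; apply: nd.
  have ev : forall v, beval v phi = false -> beval v (conj v0 l) = true.
    move=> v pf; elim: l hl {dl} => [|e l IH] hl /=; first by case: (v (Var v0)).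
    by rewrite (hl e (or_introl erefl)) /= pf IH // => e' he'; apply: hl; right.
  apply: (mp1 _ dl) => v /=; case E: (beval v phi); first by rewrite andbF.
  by rewrite ev.
have [x0 [hx0 s0]] := lindenbaum cS.
have xn : x0 (Neg phi) by apply: s0.
pose X := @alex _ (le v0 (phi0 := phi)).
have fin : finite_set [set: X] by exact: finite_finset.
have cont : continuous (fz v0 (phi0 := phi) : X -> X).
  exact: (alex_cont (@fz_mono _ v0 phi)).
have hv := H X _ fin cont (nu v0 (phi0 := phi)).
pose z0 : X := ((inord (n phi), Prof v0 phi (n phi) x0), false).
have kn : (n phi < (n phi).+1)%N by [].
have vz : valid v0 z0 by split; [exists x0; rewrite /= inordK|left].
have hS : Sk phi z0.1.1 phi.
  rewrite /= inordK //; split; last by [].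
  by exists 0, phi; split => //; exact: sub_self.
have tz : truth (X := X) (fz v0 (phi0 := phi)) (nu v0 (phi0 := phi)) phi z0 by rewrite hv.
move/(truthL vz hS): tz; rewrite /= amem_enc // => -[_ xp].
exact: (mcs_nb hx0) xp xn.
Qed.

Theorem mainTheorem3 (PV : Type) (PV_nonempty : inhabited PV) (phi : formula PV) :
  wK4C phi <->
  (forall (X : topologicalType) (f : X -> X),
      finite_set [set: X] -> continuous f -> valid_on f phi).
Proof.
split.
  by move=> d X f _ cont nu; exact: (soundness nu cont d).
by case: PV_nonempty => v0; exact: completeness.
Qed.
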